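(* Let $U_n\subset C^n([a,b],\mathbb{K})$ (with $\mathbb{K}=\mathbb{R}$ or $\mathbb{C}$, $a<b$) be a subspace of dimension $n+1$ possessing a non-negative Bernstein basis $p_{n,0},\dots,p_{n,n}$ for $\{a,b\}$. Suppose $f_0,f_1\in U_n$ are such that $f_0>0$ on $[a,b]$ and $f_1/f_0$ is strictly increasing on $[a,b]$, and write $f_0=\sum_{k=0}^n\beta_kp_{n,k}$, $f_1=\sum_{k=0}^n\gamma_kp_{n,k}$. Then there exist points $t_0,\dots,t_n\in[a,b]$ and positive coefficients $\alpha_0,\dots,\alpha_n$ such that the operator $B_nf=\sum_{k=0}^nf(t_k)\alpha_kp_{n,k}$ satisfies $B_nf_0=f_0$ and $B_nf_1=f_1$ if and only if $\beta_k>0$ for all $k$ and $$\frac{f_1(a)}{f_0(a)}=\frac{\gamma_0}{\beta_0}\le\frac{\gamma_k}{\beta_k}\le\frac{\gamma_n}{\beta_n}=\frac{f_1(b)}{f_0(b)}\quad\text{for all }k=0,\dots,n.$$ Moreover, such points and coefficients, when they exist, are unique.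
   Context: A function $f\in C^m([a,b],\mathbb{K})$ has a zero of order $k$ at $c$ if $f(c)=\dots=f^{(k-1)}(c)=0$ and $f^{(k)}(c)\ne0$ (one-sided derivatives at endpoints). For an $(m+1)$-dimensional space $V\subset C^m([a,b],\mathbb{K})$, a Bernstein basis for $\{a,b\}$ is a system $p_{m,0},\dots,p_{m,m}$ in $V$ such that each $p_{m,k}$ has a zero of order exactly $k$ at $a$ and of order exactly $m-k$ at $b$ (it is a basis of $V$). It is non-negative if each $p_{m,k}$ is real-valued and $\ge0$ on $[a,b]$. *)

(* Defs.v *)
From mathcomp Require Import all_boot all_order all_algebra.
From mathcomp Require Import reals.
From mathcomp.real_closed Require Export complex.
Set Implicit Arguments. Unset Strict Implicit. Unset Printing Implicit Defensive.
Import Order.TTheory GRing.Theory Num.Theory.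
Local Open Scope ring_scope.

Section Defs.
(* R : the reals; K : the scalar field (R or R[i]); emb : the inclusion R -> K.
   Functions on [a,b] are modelled as maps R -> K, only their values on
   [a,b] matter. *)
Variables (R : realType) (K : numFieldType) (emb : R -> K).

Definition is_deriv_on (a b : R) (g g' : R -> K) : Prop :=
  forall x, a <= x <= b ->
  forall e : R, 0 < e -> exists2 d : R, 0 < d &
    forall y, a <= y <= b -> 0 < `|y - x| < d ->
      `|(g y - g x) / emb (y - x) - g' x| < emb e.

Definition cont_on (a b : R) (g : R -> K) : Prop :=
  forall x, a <= x <= b ->
  forall e : R, 0 < e -> exists2 d : R, 0 < d &
    forall y, a <= y <= b -> `|y - x| < d -> `|g y - g x| < emb e.

Definition deriv_chain (a b : R) (m : nat) (f : R -> K) (D : nat -> R -> K) :=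
  D 0%N = f /\ forall j, (j < m)%N -> is_deriv_on a b (D j) (D j.+1).

Definition Cm_on (a b : R) (m : nat) (f : R -> K) : Prop :=
  exists D, deriv_chain a b m f D /\ forall j, (j <= m)%N -> cont_on a b (D j).

(* f has a zero of order k at c: f(c) = ... = f^(k-1)(c) = 0, f^(k)(c) <> 0.
   (For a < b the derivatives on [a,b] are uniquely determined.) *)
Definition zero_of_order (a b : R) (f : R -> K) (c : R) (k : nat) : Prop :=
  exists D, deriv_chain a b k f D /\
    (forall j, (j < k)%N -> D j c = 0) /\ D k c != 0.

(* p_{n,0},...,p_{n,n} is a non-negative Bernstein basis for {a,b} of the
   (n+1)-dimensional space U_n := span_K(p_{n,k}) in C^n([a,b],K). *)
Definition nonneg_bernstein_basis (a b : R) (n : nat) (p : 'I_n.+1 -> R -> K) :=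
  [/\ (forall k, Cm_on a b n (p k)),
      (forall c : 'I_n.+1 -> K,
          (forall x, a <= x <= b -> \sum_k c k * p k x = 0) -> forall k, c k = 0),
      (forall k : 'I_n.+1, zero_of_order a b (p k) a k),
      (forall k : 'I_n.+1, zero_of_order a b (p k) b (n - k)%N) &
      (* real-valued and non-negative on [a,b] *)
      (forall k x, a <= x <= b -> 0 <= p k x)].

Definition reproduces (a b : R) (n : nat) (p : 'I_n.+1 -> R -> K)
    (t : 'I_n.+1 -> R) (alpha : 'I_n.+1 -> K) (f : R -> K) : Prop :=
  forall x, a <= x <= b -> \sum_k f (t k) * alpha k * p k x = f x.

Definition admissible (a b : R) (n : nat) (p : 'I_n.+1 -> R -> K)
    (f0 f1 : R -> K) (t : 'I_n.+1 -> R) (alpha : 'I_n.+1 -> K) : Prop :=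
  [/\ forall k, a <= t k <= b,
      forall k, 0 < alpha k,
      reproduces a b p t alpha f0 &
      reproduces a b p t alpha f1].

Definition theorem2_stmt : Prop :=
  forall (a b : R) (n : nat) (p : 'I_n.+1 -> R -> K)
         (f0 f1 : R -> K) (beta gamma : 'I_n.+1 -> K),
  a < b ->
  nonneg_bernstein_basis a b p ->
  (forall x, a <= x <= b -> f0 x = \sum_k beta k * p k x) ->
  (forall x, a <= x <= b -> f1 x = \sum_k gamma k * p k x) ->
  (forall x, a <= x <= b -> 0 < f0 x) ->
  (forall x y, a <= x -> x < y -> y <= b -> f1 x / f0 x < f1 y / f0 y) ->
  ((exists t alpha, admissible a b p f0 f1 t alpha) <->
     [/\ forall k, 0 < beta k,
         f1 a / f0 a = gamma ord0 / beta ord0,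
         gamma ord_max / beta ord_max = f1 b / f0 b &
         forall k, gamma ord0 / beta ord0 <= gamma k / beta k <=
                   gamma ord_max / beta ord_max])
  /\
  (forall t alpha t' alpha',
     admissible a b p f0 f1 t alpha -> admissible a b p f0 f1 t' alpha' ->
     t = t' /\ alpha = alpha').

End Defs.

(* Main.v *)
Require Import Defs.
From mathcomp Require Import all_boot all_order all_algebra.
From mathcomp Require Import reals.
From mathcomp.real_closed Require Import complex.
From mathcomp Require Import all_classical all_analysis.
From mathcomp Require Import ring lra.
Set Implicit Arguments. Unset Strict Implicit. Unset Printing Implicit Defensive.
Import Order.TTheory GRing.Theory Num.Theory.
Import numFieldNormedType.Exports.
Local Open Scope classical_set_scope.
Local Open Scope ring_scope.
Lemma cont_on_within (R : realType) (a b : R) (f : R -> R) :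
  cont_on id a b f -> {within `[a,b], continuous f}.
Proof.
move=> cf; apply/subspace_continuousP => x xab.
apply/cvgrPdist_lt => e e0.
have xab' : a <= x <= b by move: xab; rewrite /= in_itv.
have [d d0 hd] := cf x xab' e e0.
rewrite near_withinE; apply/nbhs_ballP; exists d => //= y xy yab.
rewrite distrC; apply: hd; first by move: yab; rewrite /= in_itv.
by rewrite distrC.
Qed.

Lemma my_IVT (R : realType) (a b : R) (f : R -> R) :
  a <= b -> cont_on id a b f -> f a <= 0 -> 0 <= f b ->
  exists2 c, a <= c <= b & f c = 0.
Proof.
move=> ab cf fa fb.
have [|c cab fc] := @IVT R f a b 0 ab (cont_on_within cf).
  by rewrite ge_min fa /= le_max fb orbT.
by exists c => //; move: cab; rewrite in_itv.
Qed.
Lemma cont_on_cst (R : realType) (a b c : R) : cont_on id a b (fun _ => c).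
Proof. by move=> x _ e e0; exists 1 => // y _ _; rewrite subrr normr0. Qed.

Lemma cont_on_add (R : realType) (a b : R) (f g : R -> R) :
  cont_on id a b f -> cont_on id a b g -> cont_on id a b (fun x => f x + g x).
Proof.
move=> cf cg x hx e e0.
have e2 : 0 < e / 2 by rewrite divr_gt0.
have [d1 d10 h1] := cf x hx _ e2.
have [d2 d20 h2] := cg x hx _ e2.
exists (Num.min d1 d2); first by rewrite lt_min d10 d20.
move=> y hy; rewrite lt_min => /andP[y1 y2].
have := h1 y hy y1; have := h2 y hy y2; rewrite /id => u v.
rewrite (_ : f y + g y - (f x + g x) = (f y - f x) + (g y - g x)); last by ring.
apply: (le_lt_trans (ler_normD _ _)); lra.
Qed.

Lemma cont_on_scal (R : realType) (a b r : R) (f : R -> R) :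
  cont_on id a b f -> cont_on id a b (fun x => r * f x).
Proof.
move=> cf x hx e e0.
have r1 : 0 < `|r| + 1 by rewrite ltr_wpDl.
have e2 : 0 < e / (`|r| + 1) by rewrite divr_gt0.
have [d d0 h] := cf x hx _ e2.
exists d => // y hy yd; have := h y hy yd; rewrite /id => u.
rewrite -mulrBr normrM.
have nr := normr_ge0 r; have nz := normr_ge0 (f y - f x).
have : `|f y - f x| * (`|r| + 1) < e by rewrite -ltr_pdivlMr.
nra.
Qed.

Lemma cont_on_sum (R : realType) (a b : R) (I : Type) (s : seq I) (F : I -> R -> R) :
  (forall j, cont_on id a b (F j)) -> cont_on id a b (fun x => \sum_(j <- s) F j x).
Proof.
move=> cF; elim: s => [|j s IH].
  apply: (@eq_ind _ (fun _ => 0)); first exact: cont_on_cst.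
  by apply: boolp.funext => x; rewrite big_nil.
apply: (@eq_ind _ (fun x => F j x + \sum_(j <- s) F j x)); first exact: cont_on_add.
by apply: boolp.funext => x; rewrite big_cons.
Qed.
Lemma generic (R : realType) (K : numFieldType) (emb : R -> K) (re : K -> R)
 (embD : forall x y, emb (x + y) = emb x + emb y)
 (embM : forall x y, emb (x * y) = emb x * emb y)
 (embN : forall x, emb (- x) = - emb x)
 (emb0 : emb 0 = 0)
 (lee : forall x y, (emb x <= emb y) = (x <= y))
 (reE : forall r, re (emb r) = r)
 (reD : forall z w, re (z + w) = re z + re w)
 (reB : forall z w, re (z - w) = re z - re w)
 (reMe : forall z r, re (z * emb r) = re z * r)
 (ge0E : forall z, 0 <= z -> emb (re z) = z)
 (normE : forall z e, `|z| < emb e -> `|re z| < e)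
 (IVT : forall (a b : R) (f : R -> R), a <= b -> cont_on id a b f -> f a <= 0 -> 0 <= f b ->
         exists2 c, a <= c <= b & f c = 0) :
 theorem2_stmt emb.
Proof.
move=> a b n p f0 f1 beta gamma ab [pC pind pza pzb pge] f0E f1E f0pos gmono.
pose g x := f1 x / f0 x.
have aab : a <= a <= b by rewrite lexx ltW.
have bab : a <= b <= b by rewrite lexx ltW.
have f0n0 x : a <= x <= b -> f0 x != 0 by move=> hx; rewrite gt_eqF // f0pos.
have coefeq (u v : 'I_n.+1 -> K) :
    (forall x, a <= x <= b -> \sum_k u k * p k x = \sum_k v k * p k x) -> forall k, u k = v k.
  move=> h k; apply/eqP; rewrite -subr_eq0; apply/eqP.
  apply: (pind (fun k => u k - v k)) => x hx.
  rewrite (eq_bigr (fun k => u k * p k x - v k * p k x)); last by move=> i _; rewrite mulrBl.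
  by rewrite sumrB h // subrr.
have pa (k : 'I_n.+1) : (0 < k)%N -> p k a = 0.
  by move=> k0; have [D [[D0 _] [hz _]]] := pza k; rewrite -D0; apply: hz.
have pa0 : p ord0 a != 0 by have [D [[D0 _] [_ hnz]]] := pza ord0; rewrite -D0.
have pb (k : 'I_n.+1) : (k < n)%N -> p k b = 0.
  by move=> k0; have [D [[D0 _] [hz _]]] := pzb k; rewrite -D0; apply: hz; rewrite subn_gt0.
have pbn : p ord_max b != 0.
  by have [D [[D0 _] [_ hnz]]] := pzb ord_max; rewrite -D0; move: hnz; rewrite /= subnn.
have sa (u : 'I_n.+1 -> K) : \sum_k u k * p k a = u ord0 * p ord0 a.
  by rewrite big_ord_recl big1 ?addr0 // => i _; rewrite pa ?mulr0.
have sb (u : 'I_n.+1 -> K) : \sum_k u k * p k b = u ord_max * p ord_max b.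
  rewrite big_ord_recr big1 => [|i _]; last by rewrite pb ?mulr0 //; case: i.
  exact: add0r.
have ga : f1 a / f0 a = gamma ord0 / beta ord0.
  by rewrite f0E // f1E // !sa -mulf_div divff ?mulr1.
have gb : gamma ord_max / beta ord_max = f1 b / f0 b.
  by rewrite f0E // f1E // !sb -mulf_div divff ?mulr1.
have gle x y : a <= x -> x <= y -> y <= b -> g x <= g y.
  move=> ax; rewrite le_eqVlt => /predU1P[-> //|xy] yb.
  by apply/ltW/gmono.
have ginj x y : a <= x <= b -> a <= y <= b -> g x = g y -> x = y.
  move=> /andP[ax xb] /andP[ay yb]; rewrite /g => gxy.
  case: (ltgtP x y) => // h.
    by have := gmono _ _ ax h yb; rewrite gxy ltxx.
  by have := gmono _ _ ay h xb; rewrite gxy ltxx.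
have adm t al : admissible a b p f0 f1 t al ->
    forall k, beta k = f0 (t k) * al k /\ gamma k = f1 (t k) * al k.
  case=> tab apos r0 r1 k; split; symmetry.
    apply: (coefeq (fun k => f0 (t k) * al k) beta) => x hx; by rewrite -f0E // r0.
  apply: (coefeq (fun k => f1 (t k) * al k) gamma) => x hx; by rewrite -f1E // r1.
have rat t al : admissible a b p f0 f1 t al -> forall k, gamma k / beta k = g (t k).
  move=> hadm k; have [-> ->] := adm t al hadm k.
  case: hadm => _ apos _ _.
  by rewrite -mulf_div divff ?mulr1 // gt_eqF.
have key c : g a <= c <= g b -> exists2 t, a <= t <= b & g t = c.
  case/andP=> gac gcb.
  pose d j := gamma j - c * beta j.
  pose H x := \sum_j re (d j) * re (p j x).
  have f0R x : a <= x <= b -> emb (re (f0 x)) = f0 x by move=> hx; rewrite ge0E // ltW // f0pos.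
  have pR j x : a <= x <= b -> emb (re (p j x)) = p j x by move=> hx; rewrite ge0E // pge.
  have phiE x : a <= x <= b -> f1 x - c * f0 x = \sum_j d j * p j x.
    move=> hx; rewrite f0E // f1E // mulr_sumr -sumrB.
    by apply: eq_bigr => j _; rewrite /d mulrBl mulrA.
  have phiE2 x : a <= x <= b -> f1 x - c * f0 x = f0 x * (g x - c).
    by move=> hx; rewrite mulrBr /g [f0 x * (_ / _)]mulrC divfK ?f0n0 // [f0 x * c]mulrC.
  have phiR x : a <= x <= b -> emb (re (f1 x - c * f0 x)) = f1 x - c * f0 x.
    move=> hx; rewrite phiE2 //.
    have e1 : g x - c = (g x - g a) - (c - g a) by ring.
    have hx1 : a <= x by case/andP: hx.
    have hx2 : x <= b by case/andP: hx.
    rewrite e1 -(ge0E (g x - g a)) ?subr_ge0 ?gle //.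
    rewrite -(ge0E (c - g a)) ?subr_ge0 // -(f0R x) //.
    by rewrite -embN -embD -embM reE.
  have HE x : a <= x <= b -> H x = re (f1 x - c * f0 x).
    move=> hx; rewrite phiE //.
    have re0 : re 0 = 0 by rewrite -emb0 reE.
    apply: (big_rec2 (fun u v => u = re v)) => // j y1 y2 _ ->.
    have E : d j * p j x = d j * emb (re (p j x)) by rewrite pR.
    by rewrite E [RHS]reD reMe.
  have Hc : cont_on id a b H.
    apply: cont_on_sum => j; apply: cont_on_scal.
    have [D [[D0 _] cD]] := pC j.
    have := cD 0%N isT; rewrite D0 => cp x hx e e0.
    have [dl dl0 hd] := cp x hx e e0.
    by exists dl => // y hy yd; rewrite /id -reB; apply: normE; apply: hd.
  have Ha : H a <= 0.
    rewrite -(lee _ 0) HE // phiR // emb0 phiE2 //.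
    by rewrite pmulr_rle0 ?f0pos // subr_le0.
  have Hb : 0 <= H b.
    rewrite -(lee 0) HE // phiR // emb0 phiE2 //.
    by rewrite pmulr_rge0 ?f0pos // subr_ge0.
  have [t tab Ht] := IVT a b H (ltW ab) Hc Ha Hb.
  exists t => //.
  have : f0 t * (g t - c) = 0 by rewrite -phiE2 // -phiR // -HE // Ht emb0.
  by move/eqP; rewrite mulf_eq0 (negbTE (f0n0 t tab)) subr_eq0 => /eqP.
split.
  split.
    case=> t [al hadm].
    have [tab apos _ _] := hadm.
    split => //.
    - by move=> k; have [-> _] := adm t al hadm k; rewrite mulr_gt0 // f0pos.
    - move=> k; rewrite -ga gb (rat t al hadm k).
      have /andP[ta tb] := tab k.
      by rewrite !gle // ?lexx // ltW.
  case=> bpos _ _ hineq.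
  have ex k : exists tk, a <= tk <= b /\ g tk = gamma k / beta k.
    have [|tk tkab gtk] := key (gamma k / beta k).
      by rewrite -/(g a) in ga; rewrite -/(g b) in gb; rewrite ga -gb; apply: hineq.
    by exists tk.
  have [t ht] := fin_all_exists ex.
  exists t, (fun k => beta k / f0 (t k)); split.
  - by move=> k; case: (ht k).
  - by move=> k; rewrite divr_gt0 // f0pos //; case: (ht k).
  - move=> x hx; rewrite f0E //; apply: eq_bigr => k _.
    by rewrite [f0 _ * _]mulrC divfK // f0n0 //; case: (ht k).
  - move=> x hx; rewrite f1E //; apply: eq_bigr => k _.
    have [tab gt] := ht k.
    congr (_ * _); rewrite mulrCA.
    by move: gt; rewrite /g => ->; rewrite mulrC divfK // gt_eqF.
move=> t al t' al' h h'.
have tt k : t k = t' k.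
  apply: ginj; [by case: h | by case: h' |].
  by rewrite -(rat t al h) -(rat t' al' h').
have et : t = t' by apply: boolp.funext.
split => //; apply: boolp.funext => k.
have [e1 _] := adm t al h k; have [e2 _] := adm t' al' h' k.
apply: (mulfI (f0n0 (t k) _)); first by case: h.
by rewrite -e1 e2 et.
Qed.

Theorem theorem2 (R : realType) :
  theorem2_stmt (K := R) id /\ theorem2_stmt (K := R[i]) (real_complex R).
Proof.
split.
  apply: (@generic R R id id) => //.
  by move=> a b f ab cf fa fb; apply: my_IVT.
refine (@generic R _ (real_complex R) (@complex.Re R) _ _ _ _ _ _ _ _ _ _ _ _).
- by move=> x y; rewrite rmorphD.
- by move=> x y; rewrite rmorphM.
- by move=> x; rewrite rmorphN.
- by rewrite rmorph0.
- by move=> x y; rewrite lecR.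
- by [].
- by move=> [x1 y1] [x2 y2].
- by move=> [x1 y1] [x2 y2].
- by move=> [x y] r /=; rewrite mulr0 subr0.
- by move=> z z0; rewrite RRe_real // ger0_real.
- by move=> z e h; rewrite -ltcR; apply: le_lt_trans (normc_ge_Re z) h.
- by move=> a b f ab cf fa fb; apply: my_IVT.
Qed.
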